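(* Let $N > n$ and let $A$ be an $N \times n$ random matrix whose entries are independent random variables with absolutely continuous distributions. Then almost surely the following holds: for every $x \in S^{n-1}$ at which $\|Ax\|_1$ attains its minimum over $S^{n-1}$, the vector $Ax$ has exactly $N - n + 1$ nonzero coordinates.
   Context: $\|y\|_1 = \sum_j |y_j|$; $S^{n-1}$ is the Euclidean unit sphere in $\mathbb{R}^n$. *)

(* Defs.v *)
From HB Require Import structures.
From mathcomp Require Import all_boot all_order all_algebra.
From mathcomp Require Import all_classical all_reals all_analysis.
Set Implicit Arguments. Unset Strict Implicit. Unset Printing Implicit Defensive.
Import Order.TTheory GRing.Theory Num.Theory.
Local Open Scope classical_set_scope.
Local Open Scope ring_scope.

Definition mutually_independent d (Omega : measurableType d) (R : realType)
  (P : probability Omega R) (I : finType) (X : I -> {RV P >-> R}) : Prop :=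
  forall (J : {set I}) (B : I -> set R),
    (forall i, i \in J -> measurable (B i)) ->
    P (\big[setI/setT]_(i in J) (X i @^-1` B i)) =
    (\prod_(i in J) P (X i @^-1` B i))%E.

Definition abs_continuous_distribution d (Omega : measurableType d)
  (R : realType) (P : probability Omega R) (X : {RV P >-> R}) : Prop :=
  distribution P X `<< (@lebesgue_measure R).

Definition rmatrix d (Omega : measurableType d) (R : realType)
  (P : probability Omega R) (N n : nat) (X : 'I_N * 'I_n -> {RV P >-> R})
  (w : Omega) : 'M[R]_(N, n) := \matrix_(i, j) X (i, j) w.

Definition l1norm (R : realType) (N : nat) (y : 'cV[R]_N) : R :=
  \sum_(i < N) `|y i 0|.

Definition in_sphere (R : realType) (n : nat) (x : 'cV[R]_n) : Prop :=
  \sum_(j < n) x j 0 ^+ 2 = 1.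

Definition l1_sphere_minimizer (R : realType) (N n : nat) (A : 'M[R]_(N, n))
  (x : 'cV[R]_n) : Prop :=
  in_sphere x /\ forall y : 'cV[R]_n, in_sphere y -> l1norm (A *m x) <= l1norm (A *m y).

(* Main.v *)
Require Import Defs.
From HB Require Import structures.
From mathcomp Require Import all_boot all_order all_algebra.
From mathcomp Require Import all_classical all_reals all_analysis.
From mathcomp Require Import ring lra zify.
Import Order.TTheory GRing.Theory Num.Theory.
Local Open Scope ring_scope.
Set Implicit Arguments. Unset Strict Implicit. Unset Printing Implicit Defensive.
Section LinAlg.
Variable R : realType.

Definition sq (n : nat) (u : 'cV[R]_n) : R := \sum_(j < n) u j 0 ^+ 2.

Lemma sq_ge0 n (u : 'cV[R]_n) : 0 <= sq u.
Proof. by apply: sumr_ge0 => j _; rewrite sqr_ge0. Qed.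

Lemma sq_gt0 n (u : 'cV[R]_n) : u != 0 -> 0 < sq u.
Proof.
move=> un0.
case: (pselect (exists j, u j 0 != 0)) => [[j uj]|H]; last first.
  exfalso; move/negP: un0; apply; apply/eqP/matrixP => i k.
  rewrite (ord1 k) mxE; apply/eqP/negPn/negP => h; apply: H; by exists i.
rewrite /sq (bigD1 j) //=.
have h1 : 0 < u j 0 ^+ 2 by rewrite exprn_even_gt0.
have h2 : 0 <= \sum_(i < n | i != j) u i 0 ^+ 2 by apply: sumr_ge0 => i _; rewrite sqr_ge0.
lra.
Qed.

Lemma l1norm_ge0 N (y : 'cV[R]_N) : 0 <= l1norm y.
Proof. by apply: sumr_ge0 => i _. Qed.

Lemma l1norm_scale N n (A : 'M[R]_(N,n)) (a : R) u :
  l1norm (A *m (a *: u)) = `|a| * l1norm (A *m u).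
Proof.
rewrite /l1norm -scalemxAr mulr_sumr; apply: eq_bigr => i _.
by rewrite mxE normrM.
Qed.

Lemma min_ext N n (A : 'M[R]_(N,n)) x : l1_sphere_minimizer A x ->
  forall u, u != 0 -> (l1norm (A *m x))^+2 * sq u <= (l1norm (A *m u))^+2.
Proof.
move=> [Sx Hm] u un0.
have sp := sq_gt0 un0.
set r := Num.sqrt (sq u).
have rp : 0 < r by rewrite sqrtr_gt0.
have Su : in_sphere (r^-1 *: u).
  rewrite /in_sphere.
  under eq_bigr do rewrite mxE exprMn.
  by rewrite -mulr_sumr -/(sq u) exprVn sqr_sqrtr ?(ltW sp) // mulVf // gt_eqF.
have := Hm _ Su; rewrite l1norm_scale ger0_norm ?invr_ge0 ?(ltW rp) //.
set m := l1norm (A *m x); set L := l1norm (A *m u) => h.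
have h' : m * r <= L.
  have := ler_wpM2r (ltW rp) h.
  by rewrite mulrAC mulVf ?gt_eqF // mul1r.
have m0 : 0 <= m by apply: l1norm_ge0.
rewrite -(sqr_sqrtr (ltW sp)) -/r.
have mr0 : 0 <= m * r by rewrite mulr_ge0 // ltW.
nra.
Qed.

Lemma ker_ex (m n : nat) (C : 'M[R]_(m,n)) : (m < n)%N ->
  exists2 v : 'cV[R]_n, v != 0 & C *m v = 0.
Proof.
move=> mn; set K := kermx C^T.
have Kn0 : K != 0.
  rewrite -mxrank_eq0 mxrank_ker subn_eq0 -ltnNge.
  exact: leq_ltn_trans (rank_leq_col C^T) mn.
have [i Ki] : exists i, row i K != 0.
  case: (pselect (exists i, row i K != 0)) => // H; exfalso.
  move/negP: Kn0; apply; apply/eqP/row_matrixP => i; rewrite row0.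
  apply/eqP/negPn/negP => h; apply: H; by exists i.
exists (row i K)^T; first by rewrite trmx_eq0.
apply: trmx_inj; rewrite trmx_mul trmxK -row_mul mulmx_ker row0 trmx0.
done.
Qed.

Lemma abs_helper (s a b sig : R) : (sig = 1 \/ sig = -1) -> `|b| <= s * `|a| ->
  (a = 0 -> b = 0) -> `|s * a + sig * b| = s * `|a| + sig * (Num.sg a * b).
Proof.
move=> sg; rewrite ler_norml => /andP [w1 w2] wZ.
case: (ltrgtP a 0) => hy.
- rewrite ltr0_sg // (ltr0_norm hy) (@ler0_norm _ (s * a + sig * b)); last by rewrite (ltr0_norm hy) in w1 w2; case: sg => ->; nra.
  by rewrite (ltr0_norm hy) in w1 w2; case: sg => ->; lra.
- rewrite gtr0_sg // (gtr0_norm hy) (@ger0_norm _ (s * a + sig * b)); last by rewrite (gtr0_norm hy) in w1 w2; case: sg => ->; nra.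
  by rewrite (gtr0_norm hy) in w1 w2; case: sg => ->; lra.
- by rewrite hy wZ // !(mulr0, normr0, addr0, sgr0, mul0r).
Qed.

Lemma l1_part N n (A : 'M[R]_(N,n)) :
  (forall s : 'I_n -> 'I_N, injective s -> \det (\matrix_(k, j) A (s k) j) != 0) ->
  (n < N)%N -> forall x, l1_sphere_minimizer A x ->
  #|[set i | (A *m x) i 0 != 0]| = (N - n + 1)%N.
Proof.
move=> Hdet nN x Hx.
have [Sx _] := Hx.
set y := A *m x.
set Z := [set i | y i 0 == 0].
have cardC : #|[set i | y i 0 != 0]| = (N - #|Z|)%N.
  have -> : [set i | y i 0 != 0] = ~: Z by apply/setP => i; rewrite !inE.
  by rewrite cardsCs card_ord finset.setCK.
have xn0 : x != 0.
  apply/negP => /eqP x0; move: Sx; rewrite /in_sphere x0 => h.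
  have : \sum_(j < n) (0 : 'cV[R]_n) j 0 ^+ 2 = 0.
    by apply: big1 => j _; rewrite mxE expr0n.
  by rewrite h => /eqP; rewrite oner_eq0.
have Zlt : (#|Z| < n)%N.
  rewrite ltnNge; apply/negP => h.
  pose s (k : 'I_n) : 'I_N := enum_val (widen_ord h k).
  have sinj : injective s.
    move=> k1 k2 /enum_val_inj /(congr1 val) /= ?; exact: val_inj.
  have sZ k : s k \in Z by apply: enum_valP.
  set B := \matrix_(k, j) A (s k) j.
  have Bx : B *m x = 0.
    apply/matrixP => k l; rewrite (ord1 l) [RHS]mxE.
    have := sZ k; rewrite inE /y => /eqP <-; rewrite !mxE.
    by apply: eq_bigr => j _; rewrite mxE.
  have Bu : B \in unitmx by rewrite unitmxE unitfE; apply: Hdet.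
  move/negP: xn0; apply; apply/eqP.
  by rewrite -(mulKmx Bu x) Bx mulmx0.
have Zge : (n <= #|Z|.+1)%N.
  rewrite leqNgt; apply/negP => h.
  set z := #|Z|.
  set C := col_mx (\matrix_(k < z, j < n) A (enum_val k) j) x^T.
  have zn : (z + 1 < n)%N by rewrite addn1.
  have [v vn0 Cv] := ker_ex C zn.
  move: Cv; rewrite mul_col_mx => /eqP; rewrite col_mx_eq0 => /andP [/eqP C1 /eqP C2].
  set w := A *m v.
  have wZ i : y i 0 = 0 -> w i 0 = 0.
    move=> yi; have iZ : i \in Z by rewrite inE yi.
    have := congr1 (fun M : 'cV[R]_z => M (enum_rank_in iZ i) 0) C1.
    rewrite !mxE => H; rewrite -[RHS]H; apply: eq_bigr => j _.
    by rewrite mxE enum_rankK_in.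
  have xv : \sum_j x j 0 * v j 0 = 0.
    have := congr1 (fun M : 'M[R]_1 => M 0 0) C2; rewrite !mxE => H; rewrite -[RHS]H.
    by apply: eq_bigr => j _; rewrite mxE.
  set m := l1norm y.
  have [i0 yi0] : exists i, y i 0 != 0.
    case: (pselect (exists i, y i 0 != 0)) => // H; exfalso.
    have ZT : Z = finset.setT.
      apply/setP => i; rewrite !inE; apply/negPn/negP => hh; apply: H; by exists i.
    move: h; rewrite /z ZT cardsT card_ord => hh; lia.
  have mpos : 0 < m.
    rewrite /m /l1norm (bigD1 i0) //=.
    have : 0 < `|y i0 0| by rewrite normr_gt0.
    have : 0 <= \sum_(i < N | i != i0) `|y i 0| by apply: sumr_ge0.
    lra.
  set s := 1 + \sum_i `|w i 0| / `|y i 0|.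
  have s1 : 1 <= s.
    have : 0 <= \sum_i `|w i 0| / `|y i 0| by apply: sumr_ge0 => i _; rewrite divr_ge0.
    rewrite /s; lra.
  have sw i : `|w i 0| <= s * `|y i 0|.
    case: (eqVneq (y i 0) 0) => [yi|yi].
      by rewrite wZ // normr0 yi normr0 mulr0.
    have : `|w i 0| / `|y i 0| <= s.
      rewrite /s (bigD1 i) //=.
      have : 0 <= \sum_(j < N | j != i) `|w j 0| / `|y j 0|.
        by apply: sumr_ge0 => j _; rewrite divr_ge0.
      lra.
    move=> hs.
    rewrite -[`|w i 0|](@divfK _ `|y i 0|) ?normr_eq0 //.
    by apply: ler_wpM2r.
  set c := \sum_i Num.sg (y i 0) * w i 0.
  set sig : R := if c <= 0 then 1 else -1.
  have sig2 : sig ^+ 2 = 1.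
    by rewrite /sig; case: ifP => _; rewrite ?sqrrN expr1n.
  have sigc : sig * c <= 0.
    rewrite /sig; case: ifPn => hc; first by rewrite mul1r.
    by rewrite -ltNge in hc; rewrite mulN1r; lra.
  set u := s *: x + sig *: v.
  have Au : A *m u = s *: y + sig *: w by rewrite mulmxDr -!scalemxAr.
  have normAu : l1norm (A *m u) = s * m + sig * c.
    rewrite Au /l1norm /c /m /l1norm !mulr_sumr -big_split; apply: eq_bigr => i _.
    have sg : sig = 1 \/ sig = -1 by rewrite /sig; case: ifP => _; [left|right].
    rewrite mxE [(s *: y) i 0]mxE [(sig *: w) i 0]mxE; by apply: abs_helper; [exact: sg | exact: sw | exact: wZ].
  have sqU : sq u = s ^+ 2 + sq v.
    rewrite /sq.
    transitivity (\sum_(j < n) (s ^+ 2 * x j 0 ^+ 2 + (2 * s * sig) * (x j 0 * v j 0)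
                                + sig ^+ 2 * v j 0 ^+ 2)).
      by apply: eq_bigr => j _; rewrite !mxE; ring.
    rewrite !big_split /= -!mulr_sumr.
    move: Sx; rewrite /in_sphere => ->; rewrite xv sig2; ring.
  have un0 : u != 0.
    apply/negP => /eqP u0.
    have : 0 < sq u by rewrite sqU; have := sq_gt0 vn0; nra.
    rewrite u0 /sq big1 ?ltxx // => j _; by rewrite mxE expr0n.
  have := min_ext Hx un0; rewrite -/y -/m normAu sqU.
  have q0 := sq_gt0 vn0.
  have := l1norm_ge0 (A *m u); rewrite normAu => L0.
  have mq : 0 < m ^+ 2 * sq v by rewrite mulr_gt0 // exprn_gt0.
  have sm0 : 0 <= s * m by rewrite mulr_ge0 //; lra.
  have hh : (s * m + sig * c) ^+ 2 <= (s * m) ^+ 2.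
    have : sig * c * (2 * (s * m) + sig * c) <= 0.
      apply: mulr_le0_ge0 => //; lra.
    move=> hh; rewrite sqrrD; lra.
  move=> hm; have : m ^+ 2 * (s ^+ 2 + sq v) <= (s * m) ^+ 2 by exact: le_trans hm hh.
  rewrite mulrDr exprMn; lra.
rewrite cardC; lia.
Qed.
End LinAlg.

Local Open Scope classical_set_scope.
Local Open Scope ring_scope.
Section EpsDelta.
Local Open Scope ereal_scope.
Variable R : realType.

Lemma ac_eps_delta (mu : {finite_measure set R -> \bar R}) :
  mu `<< (@lebesgue_measure R) -> forall e : R, (0 < e)%R ->
  exists2 dl : R, (0 < dl)%R & forall A, measurable A ->
    (@lebesgue_measure R) A < dl%:E -> mu A < e%:E.
Proof.
move=> numu e e0.
apply: contrapT => H.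
have {H} : forall n, exists A, [/\ measurable A,
    (@lebesgue_measure R) A < (2 ^- n.+1)%:E & e%:E <= mu A].
  move=> n; apply: contrapT => K; apply: H; exists (2 ^- n.+1)%R.
    by rewrite invr_gt0 exprn_gt0.
  move=> A mA lA; rewrite ltNge; apply/negP => eA; apply: K; by exists A; split.
move=> /choice[F /= HF].
have mF i : measurable (F i) by have [] := HF i.
have : (@lebesgue_measure R) (lim_sup_set F) = 0.
  apply: lim_sup_set_cvg0 => //.
  have h : \sum_(0 <= n < k) (1 / 2 ^+ n.+1)%:E @[k --> \oo] --> (1%E : \bar R).
    apply/fine_cvgP; split.
      apply: nearW => /= n; rewrite sum_fin_num//.
      by apply/allP => /= r /mapP[/= k _] ->.
    have := @cvg_geometric_series_half R 1 0; rewrite {1}/series/= expr0 divr1.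
    under [in X in _ -> X]eq_fun do rewrite sumEFin.
    by under eq_fun do under eq_bigr do rewrite addn1 natrX.
  apply: (@le_lt_trans _ _ (\sum_(0 <= n <oo) (1 / (2 ^ n.+1))%:E)).
    apply: lee_lim.
    - exact: is_cvg_ereal_nneg_natsum_cond.
    - by apply/cvg_ex; exists 1.
    - apply: nearW => /= n; apply: lee_sum => i _.
      by have [_ /ltW + _] := HF i; rewrite div1r.
  by move/cvg_lim : h => ->//; rewrite ltry.
have mL : measurable (lim_sup_set F).
  by apply: bigcap_measurable => // k _; exact: bigcup_measurable.
move=> L0.
have mu0 : mu (lim_sup_set F) = 0.
  apply: (proj1 (measure0_null_setP mu mL)); apply: numu.
  exact: (proj2 (measure0_null_setP (@lebesgue_measure R) mL)).
have : e%:E <= mu (lim_sup_set F).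
  have echarge n : e%:E <= mu (\bigcup_(j >= n) F j).
    have [_ _ /le_trans] := HF n; apply.
    rewrite le_measure ?inE//; [exact: mF|by apply: bigcup_measurable => k _; exact: mF|].
    by apply: bigcup_sup => /=.
  have /(_ _ _)/cvg_lim <-// := lim_sup_set_cvg mu F.
    apply: lime_ge.
      apply: ereal_nonincreasing_is_cvgn => a b ab.
      rewrite le_measure ?inE//; [by apply: bigcup_measurable => k _; exact: mF|
                                  by apply: bigcup_measurable => k _; exact: mF|].
      by apply: bigcup_subset => n/=; exact: leq_trans.
    by apply: nearW => k; exact: echarge.
  by rewrite -ge0_fin_numE// fin_num_measure//; apply: bigcup_measurable => k _; exact: mF.
by rewrite mu0 lee_fin leNgt e0.
Qed.
End EpsDelta.
Lemma bigsetI_in (T : Type) (I : finType) (J : {set I}) (F : I -> set T) x :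
  (\big[setI/setT]_(i in J) F i) x <-> (forall i, i \in J -> F i x).
Proof.
rewrite -bigcap_seq_cond; split => [h i iJ|h i /andP[_ iJ]].
  by apply: h; rewrite /= mem_index_enum iJ.
exact: h.
Qed.

Section Indep.
Variables (R : realType) (d : measure_display) (Omega : measurableType d)
  (P : probability Omega R) (N n : nat) (X : 'I_N * 'I_n -> {RV P >-> R}).
Hypothesis Hind : mutually_independent X.
Variable p0 : 'I_N * 'I_n.

Local Notation I := ('I_N * 'I_n)%type.
Local Notation m := #|{: I}|.

Definition Yc (q : I) (w : Omega) : R := if q == p0 then 0 else X q w.
Definition Y (w : Omega) : m.-tuple R := [tuple Yc (enum_val k) w | k < m].

Lemma mYc q : measurable_fun setT (Yc q).
Proof.
rewrite /Yc; case: (q == p0); first exact: measurable_cst.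
exact: measurable_funPT.
Qed.

Lemma mY : measurable_fun setT Y.
Proof.
apply/measurable_fun_tnthP => k.
have -> : (tnth (T:=R))^~ k \o Y = Yc (enum_val k).
  by apply/funext => w /=; rewrite tnth_mktuple.
exact: mYc.
Qed.

Lemma mYp (S : set (m.-tuple R)) : measurable S -> measurable (Y @^-1` S).
Proof. by move=> mS; rewrite -[_ @^-1` _]setTI; apply: mY. Qed.

Lemma mXp q (A : set R) : measurable A -> measurable (X q @^-1` A).
Proof. by move=> mA; rewrite -[_ @^-1` _]setTI; apply: measurable_funPT. Qed.

Definition rect : set (set (m.-tuple R)) :=
  [set S | exists B : 'I_m -> set R, (forall k, measurable (B k)) /\
     S = [set t | forall k, B k (tnth t k)]].

Lemma tuple_measurableE : @measurable _ (m.-tuple R) = <<s rect >>.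
Proof.
apply/seteqP; split.
- apply: smallest_sub; first exact: smallest_sigma_algebra.
  elim/big_ind: _ => //.
  + by move=> S1 S2 h1 h2 S [/h1|/h2].
  + move=> i _ S [A mA <-]; apply: sub_sigma_algebra.
    exists (fun k => if k == i then A else setT); split.
      by move=> k; case: ifP.
    apply/seteqP; split => t /=.
      by move=> [_ At] k; case: eqP => [->|].
    by move=> h; split => //; have := h i; rewrite eqxx.
- apply: smallest_sub; first exact: sigma_algebra_measurable.
  move=> S [B [mB ->]].
  have -> : [set t | forall k, B k (tnth t k)] =
      \big[setI/setT]_(k in finset.setT) ((tnth (T:=R))^~ k @^-1` B k).
    apply/seteqP; split => t /=.
      by move=> h; apply/bigsetI_in => k _; apply: h.
    by move/bigsetI_in => h k; apply: h; rewrite finset.in_setT.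
  apply: bigsetI_measurable => k _.
  by rewrite -[_ @^-1` _]setTI; apply: measurable_tnth.
Qed.

Lemma rect_setI : setI_closed rect.
Proof.
move=> S1 S2 [B1 [mB1 ->]] [B2 [mB2 ->]].
exists (fun k => B1 k `&` B2 k); split; first by move=> k; apply: measurableI.
by apply/seteqP; split => t /=; [move=> [h1 h2] k; split|move=> h; split => k; case: (h k)].
Qed.


Lemma indep_rect (A : set R) S : measurable A -> rect S ->
  P (X p0 @^-1` A `&` Y @^-1` S) = (P (X p0 @^-1` A) * P (Y @^-1` S))%E.
Proof.
move=> mA [B [mB ->]].
pose C (q : I) := B (enum_rank q).
have mC q : measurable (C q) by apply: mB.
have YS : Y @^-1` [set t | forall k, B k (tnth t k)] =
    [set w | forall q, C q (Yc q w)].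
  apply/seteqP; split => w /= h.
    by move=> q; have := h (enum_rank q); rewrite tnth_mktuple enum_rankK.
  by move=> k; rewrite tnth_mktuple /C -{1}(enum_valK k); apply: h.
rewrite YS.
case: (pselect (C p0 0)) => hC; last first.
  have -> : [set w | forall q, C q (Yc q w)] = set0.
    apply/seteqP; split => w //= h; apply: hC; have := h p0.
    by rewrite /Yc eqxx.
  by rewrite setI0 measure0 mule0.
set J := [set q : I | q != p0]%SET.
have E1 : [set w | forall q, C q (Yc q w)] =
    \big[setI/setT]_(q in J) (X q @^-1` C q).
  apply/seteqP; split => w /= h.
    apply/bigsetI_in => q; rewrite inE => qp; have := h q.
    by rewrite /Yc (negbTE qp).
  move/bigsetI_in: h => h q; rewrite /Yc; case: eqP => [->//|/eqP qp].
  by apply: h; rewrite inE.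
pose D (q : I) := if q == p0 then A else C q.
have E2 : X p0 @^-1` A `&` \big[setI/setT]_(q in J) (X q @^-1` C q) =
    \big[setI/setT]_(q in finset.setT) (X q @^-1` D q).
  apply/seteqP; split => w /=.
    move=> [hA /bigsetI_in h]; apply/bigsetI_in => q _; rewrite /D.
    by case: eqP => [->//|/eqP qp]; apply: h; rewrite inE.
  move/bigsetI_in => h; split.
    by have := h p0; rewrite finset.in_setT /D eqxx => /(_ isT).
  apply/bigsetI_in => q; rewrite inE => qp.
  by have := h q; rewrite finset.in_setT /D (negbTE qp) => /(_ isT).
rewrite E1 E2 (@Hind finset.setT D); last by move=> q _; rewrite /D; case: ifP.
rewrite (@Hind J C); last by move=> q _.
rewrite (bigD1 p0) ?finset.in_setT //= {1}/D eqxx; congr (_ * _)%E.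
apply: eq_big => q; first by rewrite finset.in_setT inE.
by move=> /andP[_ qp]; rewrite /D (negbTE qp).
Qed.

Lemma P_fin (U : set Omega) : measurable U -> P U = (fine (P U))%:E.
Proof. by move=> mU; rewrite fineK // fin_num_measure. Qed.

Lemma P_lty (U : set Omega) : measurable U -> (P U < +oo)%E.
Proof. by move=> mU; rewrite P_fin // ltry. Qed.

Lemma indep_XY (A : set R) (S : set (m.-tuple R)) : measurable A -> measurable S ->
  P (X p0 @^-1` A `&` Y @^-1` S) = (P (X p0 @^-1` A) * P (Y @^-1` S))%E.
Proof.
move=> mA mS.
have mXA := mXp p0 mA.
apply: (@dynkin_induction _ _ rect
  (fun S => P (X p0 @^-1` A `&` Y @^-1` S) = (P (X p0 @^-1` A) * P (Y @^-1` S))%E));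
  last by rewrite -tuple_measurableE.
- exact: tuple_measurableE.
- exact: rect_setI.
- by rewrite preimage_setT setIT probability_setT mule1.
- by move=> S' hS'; exact: indep_rect.
- move=> S' mS' IH.
  rewrite -preimage_setC -setDE measureD //; last 2 first.
    exact: mYp.
    exact: P_lty.
  transitivity (P (X p0 @^-1` A) - P (X p0 @^-1` A) * P (Y @^-1` S'))%E.
    by congr (_ - _)%E.
  rewrite probability_setC; last exact: mYp.
  rewrite (P_fin mXA) (P_fin (mYp mS')) -EFinM -EFinB -EFinB -EFinM.
  congr (_%:E); ring.
- move=> F mF tF IH.
  rewrite preimage_bigcup setI_bigcupr !measure_bigcup //; last 4 first.
  + by move=> i _; apply: mYp.
  + by move=> i j _ _ [w [a b]]; apply: tF => //; exists (Y w).
  + by move=> i _; apply: measurableI => //; apply: mYp.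
  + apply: trivIset_setIl.
    by move=> i j _ _ [w [a b]]; apply: tF => //; exists (Y w).
  transitivity (\sum_(i <oo | i \in setT) (P (X p0 @^-1` A) * P (Y @^-1` F i)))%E.
    by apply: eq_eseriesr => i _; apply: IH.
  rewrite (P_fin mXA) nneseriesZl //.
Qed.

Hypothesis Hac : abs_continuous_distribution (X p0).

Lemma key (h : m.-tuple R -> R) : measurable_fun setT h ->
  P.-negligible [set w | X p0 w = h (Y w)].
Proof.
move=> mh.
set Z := fun w => h (Y w).
have mZ : measurable_fun setT Z := measurableT_comp mh mY.
have mX0 : measurable_fun setT (X p0) := measurable_funPT _.
have mhp B : measurable B -> measurable (h @^-1` B).
  by move=> mB; rewrite -[_ @^-1` _]setTI; apply: mh.
have mZp B : measurable B -> measurable (Z @^-1` B).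
  by move=> mB; rewrite -[_ @^-1` _]setTI; apply: mZ.
pose E (M : nat) := [set w | X p0 w = Z w] `&` X p0 @^-1` `]-(M.+1%:R), M.+1%:R[.
have -> : [set w | X p0 w = h (Y w)] = \bigcup_M E M.
  apply/seteqP; split => w /=.
    move=> hw; exists (Num.truncn `|X p0 w|) => //; split => //=.
    rewrite in_itv /= -ltr_norml; apply: truncnS_gt.
  by move=> [M _ []].
apply: negligible_bigcup => M.
set Mr : R := M.+1%:R.
have Mr0 : 0 < Mr by rewrite ltr0n.
have mE : measurable (E M).
  apply: measurableI; last exact: mXp (measurable_itv _).
  have -> : [set w | X p0 w = Z w] = (X p0 \- Z) @^-1` [set 0].
    apply/seteqP; split => w /=; first by move=> ->; rewrite subrr.
    by move/eqP; rewrite subr_eq0 => /eqP.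
  by rewrite -[_ @^-1` _]setTI; apply: measurable_realfun.measurable_funB.
exists (E M); split => //.
apply/eqP; rewrite eq_le measure_ge0 andbT.
apply/lee_addgt0Pr => e e0; rewrite add0e.
have [dl dl0 Hdl] := ac_eps_delta Hac e0.
set K := (Num.truncn (2 * Mr / dl)).+1.
have Kpos : 0 < K%:R :> R by rewrite ltr0n.
set L : R := 2 * Mr / K%:R.
have Lpos : 0 < L by rewrite /L divr_gt0 // mulr_gt0.
have KL : K%:R * L = 2 * Mr by rewrite /L mulrC divfK // gt_eqF.
have Ldl : L < dl.
  have h1 : 2 * Mr / dl < K%:R by apply: truncnS_gt.
  rewrite /L ltr_pdivrMr //; rewrite ltr_pdivrMr // in h1; lra.
pose a (k : nat) : R := - Mr + k%:R * L.
have amono p q : (p <= q)%N -> a p <= a q.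
  by move=> pq; rewrite /a lerD2l ler_wpM2r ?ler_nat // ltW.
pose J (k : nat) : set R := [set` `[a k, a k.+1[].
have mJ k : measurable (J k) by apply: measurable_itv.
have lamJ k : (@lebesgue_measure R) (J k) = L%:E.
  rewrite lebesgue_measure_itv /= lte_fin /a ltrD2l ltr_pM2r // ltr_nat ltnSn.
  by rewrite -EFinB; congr (_%:E); rewrite /a -natr1; ring.
have PJ k : (P (X p0 @^-1` J k) < e%:E)%E.
  by apply: (Hdl _ (mJ k)); rewrite lamJ lte_fin.
have tJ : trivIset setT (fun k => Z @^-1` J k).
  move=> i j _ _ [w [/= hi hj]].
  move: hi hj; rewrite /J /= !in_itv /= => /andP[i1 i2] /andP[j1 j2].
  case: (ltngtP i j) => // ij; exfalso.
    by have := amono _ _ ij; lra.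
  by have := amono _ _ ij; lra.
have cover : E M `<=` \big[setU/set0]_(k < K) (X p0 @^-1` J k `&` Z @^-1` J k).
  move=> w [/= eqZ]; rewrite in_itv /= => /andP[x1 x2].
  set x := X p0 w in eqZ x1 x2 *.
  have t0 : 0 <= (x + Mr) / L by rewrite divr_ge0 //; lra.
  set k := Num.truncn ((x + Mr) / L).
  have [k1 k2] : k%:R <= (x + Mr) / L /\ (x + Mr) / L < k.+1%:R.
    by have /andP[] := truncn_itv t0.
  have kK : (k < K)%N.
    rewrite /k truncn_lt_nat // ltr_pdivrMr // KL; lra.
  rewrite -(bigcup_mkord K (fun k => X p0 @^-1` J k `&` Z @^-1` J k)); exists k => //.
  have xJ : J k x.
    rewrite /J /= in_itv /= /a.
    rewrite ler_pdivlMr // in k1; rewrite ltr_pdivrMr // in k2.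
    apply/andP; split; lra.
  by split => //=; rewrite -eqZ.
have mF : forall k, `I_K k -> measurable (X p0 @^-1` J k `&` Z @^-1` J k).
  by move=> k _; apply: measurableI; [apply: mXp|apply: mZp].
apply: (le_trans (content_subadditive P mF mE cover)).
apply: (@le_trans _ _ (\sum_(k < K) (e%:E * P (Z @^-1` J k)))%E).
  apply: lee_sum => k _.
  have -> : Z @^-1` J k = Y @^-1` (h @^-1` J k) by [].
  have Hk := indep_XY (mJ k) (mhp _ (mJ k)).
  apply: (@le_trans _ _ (P (X p0 @^-1` J k) * P (Y @^-1` (h @^-1` J k)))%E).
    by rewrite -Hk; exact: le_refl.
  apply: lee_wpmul2r; first exact: measure_ge0.
  exact: ltW.
rewrite -ge0_sume_distrr; last by move=> k _; apply: measure_ge0.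
have HU := @measure_bigsetU _ _ _ P (fun k => Z @^-1` J k) (fun k => mZp _ (mJ k)) tJ K.
rewrite (_ : \sum_(k < K) P (Z @^-1` J k) = P (\big[setU/set0]_(k < K) Z @^-1` J k)); last first.
  by symmetry; exact: HU.
rewrite -[leRHS]mule1; apply: lee_wpmul2l; first by rewrite lee_fin ltW.
apply: probability_le1; apply: bigsetU_measurable => k _; exact: mZp.
Qed.
End Indep.
Section Alg.
Variable R : realType.

Lemma det_decomp k (A B : 'M[R]_k.+1) :
  (forall i j, (i != 0) || (j != 0) -> A i j = B i j) -> B 0 0 = 0 ->
  \det A = A 0 0 * cofactor B 0 0 + \det B.
Proof.
move=> AB B00.
have cof j : cofactor A 0 j = cofactor B 0 j.
  rewrite /cofactor; congr (_ * \det _); apply/matrixP => a b; rewrite !mxE.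
  by apply: AB; rewrite eq_sym neq_lift.
rewrite (expand_det_row A 0) (expand_det_row B 0) !big_ord_recl B00 mul0r add0r.
congr (_ + _); first by rewrite cof.
by apply: eq_bigr => j _; rewrite cof AB // eq_sym neq_lift orbT.
Qed.

Lemma meas_inv : measurable_fun setT (@GRing.inv R).
Proof.
have -> : [set: R] = ~` [set 0] `|` [set 0].
  apply/seteqP; split => x //= _; case: (eqVneq x 0) => [->|x0]; [by right|left; exact/eqP].
have m0 : measurable ([set 0] : set R) by apply: measurable_set1.
apply/measurable_funU => //; first exact: measurableC.
split; last exact: measurable_fun_set1.
apply: measurable_realfun.open_continuous_measurable_fun.
  apply: closed_openC; apply: compact_closed; [exact: Rhausdorff | exact: compact_set1].
move=> x; rewrite inE /= => /eqP x0; exact: inv_continuous.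
Qed.

Lemma det_meas (d' : measure_display) (T : measurableType d') k (M : T -> 'M[R]_k) :
  (forall a b, measurable_fun setT (fun t => M t a b)) ->
  measurable_fun setT (fun t => \det (M t)).
Proof.
move=> mM.
apply: measurable_sum => s.
apply: measurable_realfun.measurable_funM; first exact: measurable_cst.
by apply: measurable_prod => i _; apply: mM.
Qed.
End Alg.

Lemma bigsetU_in (T : Type) (I : finType) (Pr : pred I) (F : I -> set T) x :
  (\big[setU/set0]_(i | Pr i) F i) x -> exists i, Pr i /\ F i x.
Proof.
rewrite -bigcup_seq_cond => -[i /andP[_ Pi] Fi]; by exists i.
Qed.

Lemma bigsetU_negl d' (T : measurableType d') (Rr : realType)
  (mu : {measure set T -> \bar Rr}) (I : finType) (Pr : pred I) (F : I -> set T) :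
  (forall i, Pr i -> mu.-negligible (F i)) ->
  mu.-negligible (\big[setU/set0]_(i | Pr i) F i).
Proof.
move=> h; elim/big_ind: _ => //; first exact: negligible_set0.
by move=> A B; apply: negligibleU.
Qed.

Lemma bigsetU_intro (T : Type) (I : finType) (Pr : pred I) (F : I -> set T) x i :
  Pr i -> F i x -> (\big[setU/set0]_(i | Pr i) F i) x.
Proof.
move=> Pi Fi; rewrite -bigcup_seq_cond; exists i => //=.
by rewrite mem_index_enum Pi.
Qed.

Section Main.
Variables (R : realType) (d : measure_display) (Omega : measurableType d)
  (P : probability Omega R) (N n : nat) (X : 'I_N * 'I_n -> {RV P >-> R}).
Hypothesis Hind : mutually_independent X.
Hypothesis Hac : forall ij, abs_continuous_distribution (X ij).

Lemma det_ae k : forall (s : 'I_k -> 'I_N) (c : 'I_k -> 'I_n),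
  injective s -> injective c ->
  P.-negligible [set w | \det (\matrix_(a, b) X (s a, c b) w) = 0].
Proof.
elim: k => [|k IH] s c sinj cinj.
  have -> : [set w | \det (\matrix_(a, b) X (s a, c b) w) = 0] = set0.
    apply/seteqP; split => w //=; rewrite det_mx00 => /eqP; by rewrite oner_eq0.
  exact: negligible_set0.
set p0 := (s 0, c 0).
pose Mt (t : #|{: 'I_N * 'I_n}|.-tuple R) : 'M[R]_k.+1 :=
  \matrix_(a, b) tnth t (enum_rank (s a, c b)).
have MtY w a b : Mt (Y X p0 w) a b = Yc X p0 (s a, c b) w.
  by rewrite /Mt mxE tnth_mktuple enum_rankK.
have Mtne w a b : (a != 0) || (b != 0) -> Mt (Y X p0 w) a b = X (s a, c b) w.
  move=> h; rewrite MtY /Yc; case: eqP => // -[/sinj a0 /cinj b0].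
  by move: h; rewrite a0 b0 eqxx.
have dec w : \det (\matrix_(a, b) X (s a, c b) w) =
    X p0 w * cofactor (Mt (Y X p0 w)) 0 0 + \det (Mt (Y X p0 w)).
  rewrite (@det_decomp _ _ _ (Mt (Y X p0 w))).
  - by rewrite mxE.
  - by move=> i j h; rewrite mxE Mtne.
  - by rewrite MtY /Yc eqxx.
have cofE w : cofactor (Mt (Y X p0 w)) 0 0 =
    \det (\matrix_(a, b) X ((s \o lift 0) a, (c \o lift 0) b) w).
  rewrite /cofactor addn0 expr0 mul1r; congr (\det _); apply/matrixP => a b.
  by have := Mtne w (lift 0 a) (lift 0 b); rewrite /Mt !mxE => ->//.
pose h := fun t => - \det (Mt t) / cofactor (Mt t) 0 0.
have mMt a b : measurable_fun setT (fun t => Mt t a b).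
  have -> : (fun t => Mt t a b) = (tnth (T:=R))^~ (enum_rank (s a, c b)).
    by apply/funext => t; rewrite /Mt mxE.
  exact: measurable_tnth.
have mh : measurable_fun setT h.
  apply: measurable_realfun.measurable_funM.
    by apply: measurable_realfun.measurable_funN; apply: det_meas.
  apply: measurableT_comp; first exact: meas_inv.
  apply: measurable_realfun.measurable_funM; first exact: measurable_cst.
  apply: det_meas => a b.
  have -> : (fun t => (row' 0 (col' 0 (Mt t))) a b) = (fun t => Mt t (lift 0 a) (lift 0 b)).
    by apply/funext => t; rewrite !mxE.
  exact: mMt.
have IH' := IH (s \o lift 0) (c \o lift 0)
  (inj_comp sinj (@lift_inj _ 0)) (inj_comp cinj (@lift_inj _ 0)).
apply: (negligibleS _ (negligibleU IH' (key Hind (Hac p0) mh))).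
move=> w /= hdet; rewrite dec in hdet.
case: (eqVneq (cofactor (Mt (Y X p0 w)) 0 0) 0) => hc.
  by left; rewrite -cofE.
right; move/eqP: hdet; rewrite addr_eq0 => /eqP H.
by rewrite /h -H mulfK.
Qed.

End Main.

Local Close Scope classical_set_scope.
Unset Implicit Arguments.

Theorem lemma8p3 (R : realType) (d : measure_display) (Omega : measurableType d)
  (P : probability Omega R) (N n : nat) (X : 'I_N * 'I_n -> {RV P >-> R}) :
  (n < N)%N ->
  mutually_independent X ->
  (forall ij, abs_continuous_distribution (X ij)) ->
  {ae P, forall w, forall x : 'cV[R]_n,
     l1_sphere_minimizer (rmatrix X w) x ->
     #|[set i : 'I_N | (rmatrix X w *m x) i 0 != 0]| = (N - n + 1)%N}.
Proof.
move=> nN Hind Hac.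
pose F (s : {ffun 'I_n -> 'I_N}) :=
  [set w | \det (\matrix_(a, b) X (s a, b) w) = 0]%classic.
have HF : P.-negligible (\big[setU/set0]_(s : {ffun 'I_n -> 'I_N} | injectiveb s) F s).
  apply: bigsetU_negl => s /injectiveP sinj.
  exact: (det_ae Hind Hac sinj (@inj_id _)).
apply: (negligibleS _ HF) => w /= Hw.
apply: contrapT => H; apply: Hw => x Hx.
apply: l1_part nN x Hx => s sinj; apply/eqP => hdet.
apply: H; apply: (@bigsetU_intro _ _ _ _ _ (finfun s)).
  by apply/injectiveP => a b; rewrite !ffunE; exact: sinj.
rewrite /F /= -[RHS]hdet; congr (\det _); apply/matrixP => a b.
by rewrite !mxE ffunE.
Qed.
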